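(* Let $p,p'$ be POPs of size $k$ and $q,q'$ be POPs of size $l$. If $p\sim p'$ and $q\sim q'$, then $p+q\sim p'+q'$.
   Context: A partially ordered pattern (POP) $p$ of size $k$ is a partial order $\le_p$ on $[k]=\{1,\dots,k\}$. A permutation $\pi=\pi_1\cdots\pi_n$ contains $p$ if there are indices $i_1<\dots<i_k$ with $\pi_{i_j}<\pi_{i_m}$ whenever $j<_p m$; otherwise it avoids $p$. $\mathfrak S_n(p)$ is the set of permutations of $[n]$ avoiding $p$, and $p\sim q$ (Wilf-equivalence) means $|\mathfrak S_n(p)|=|\mathfrak S_n(q)|$ for all $n\ge 1$. For a POP $p$ of size $k$ and a POP $q$ of size $l$, the disjoint sum $p+q$ is the POP of size $k+l$ on $[k+l]$ in which $i\le j$ for $i,j\in[k]$ iff $i\le_p j$, $k+i\le k+j$ for $i,j\in[l]$ iff $i\le_q j$, and no element of $[k]$ is comparable with an element of $[k+1,k+l]$. *)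

(* Defs.v *)
From mathcomp Require Import all_boot all_fingroup.
Set Implicit Arguments. Unset Strict Implicit. Unset Printing Implicit Defensive.

(* A partially ordered pattern (POP) of size k: a relation on [k] = 'I_k
   (elements 0..k-1 stand for 1..k) that is a (non-strict) partial order. *)
Definition is_pop (k : nat) (p : rel 'I_k) : Prop :=
  reflexive p /\ antisymmetric p /\ transitive p.

Record pop (k : nat) := Pop { pop_rel :> rel 'I_k; pop_axiom : is_pop pop_rel }.

Definition pop_lt (k : nat) (p : pop k) (j m : 'I_k) : bool := (j != m) && p j m.

(* pi contains p: there are indices i_1 < ... < i_k (a strictly increasing map
   f : 'I_k -> 'I_n, j |-> i_(j+1)) with pi(i_j) < pi(i_m) whenever j <_p m. *)
Definition contains (k n : nat) (p : pop k) (pi : 'S_n) : bool :=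
  [exists f : {ffun 'I_k -> 'I_n},
    [forall j : 'I_k, forall m : 'I_k,
       ((j < m) ==> (f j < f m)) && (pop_lt p j m ==> (pi (f j) < pi (f m)))]].

Definition avoids (k n : nat) (p : pop k) (pi : 'S_n) : bool := ~~ contains p pi.

Definition num_avoiders (k : nat) (p : pop k) (n : nat) : nat :=
  #|[set pi : 'S_n | avoids p pi]|.

Definition wilf_equiv (k l : nat) (p : pop k) (q : pop l) : Prop :=
  forall n : nat, 1 <= n -> num_avoiders p n = num_avoiders q n.

Definition sum_rel (k l : nat) (p : pop k) (q : pop l) : rel 'I_(k + l) :=
  fun x y =>
    match split x, split y with
    | inl i, inl j => p i j
    | inr i, inr j => q i j
    | _, _ => false
    end.

Lemma sum_rel_is_pop (k l : nat) (p : pop k) (q : pop l) : is_pop (sum_rel p q).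
Proof.
case: p => p [pr [pa pt]]; case: q => q [qr [qa qt]]; rewrite /sum_rel /=.
split; [|split].
- by move=> x; case: (split x).
- move=> x y; case Ex: (split x) => [i|i]; case Ey: (split y) => [j|j] //=.
  + by move/pa => eij; rewrite -(splitK x) -(splitK y) Ex Ey eij.
  + by move/qa => eij; rewrite -(splitK x) -(splitK y) Ex Ey eij.
- move=> y x z; case: (split x) => [i|i]; case: (split y) => [j|j] //=;
  case: (split z) => [m|m] //=; [exact: pt | exact: qt].
Qed.

Definition pop_sum (k l : nat) (p : pop k) (q : pop l) : pop (k + l) :=
  Pop (sum_rel_is_pop p q).

(* Main.v *)
Require Import Defs.
From mathcomp Require Import all_boot all_fingroup zify.
From Stdlib Require Import ClassicalEpsilon.
Set Implicit Arguments. Unset Strict Implicit. Unset Printing Implicit Defensive.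

Definition contP (k : nat) (p : rel 'I_k) (s : seq nat) : Prop :=
  exists f : 'I_k -> nat, [/\ forall j, f j < size s,
     forall j m : 'I_k, j < m -> f j < f m &
     forall j m, (j != m) && p j m -> nth 0 s (f j) < nth 0 s (f m)].
Definition cont k (p : rel 'I_k) s : bool :=
  if excluded_middle_informative (contP p s) then true else false.
Lemma contE k p s : reflect (contP p s) (@cont k p s).
Proof. by rewrite /cont; case: excluded_middle_informative => H; constructor. Qed.

Lemma size_take_le t (s : seq nat) : size (take t s) <= size s.
Proof. by rewrite size_take; case: ifP => // /ltnW. Qed.
Lemma nth_take_in t (s : seq nat) i : i < size (take t s) -> nth 0 (take t s) i = nth 0 s i.
Proof. rewrite size_take => H; rewrite nth_take //; move: H; case: ifP => // /[swap]; lia. Qed.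

Section C.
Variables (k : nat) (p : rel 'I_k).

Lemma cont_take t s : cont p (take t s) -> cont p s.
Proof.
move/contE=> [f [H1 H2 H3]]; apply/contE; exists f; split => //.
- by move=> j; apply: leq_trans (H1 j) (size_take_le _ _).
- by move=> j m /H3; rewrite !nth_take_in.
Qed.

Lemma cont_drop t s : cont p (drop t s) -> cont p s.
Proof.
move/contE=> [f [H1 H2 H3]]; apply/contE; exists (fun j => t + f j); split => //.
- by move=> j; have := H1 j; rewrite size_drop; lia.
- by move=> j m /H2; lia.
- by move=> j m /H3; rewrite !nth_drop.
Qed.

Lemma cont_map (r : nat -> nat) s : {in s &, forall x y, (r x < r y) = (x < y)} ->
  cont p (map r s) = cont p s.
Proof.
move=> Hr; apply/contE/contE => -[f [H1 H2 H3]]; exists f; rewrite ?size_map in H1 *;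
  split => // j m /H3; rewrite ?size_map in H1 *.
- by rewrite !(nth_map 0) // Hr // mem_nth.
- by rewrite !(nth_map 0) // Hr // mem_nth.
Qed.

Lemma cont_nil : cont p [::] = (k == 0).
Proof.
apply/contE/eqP => [[f [H1 _ _]]|k0].
- by case: k f H1 => // k' f /(_ ord0).
- by subst k; exists (fun _ => 0); split => -[].
Qed.
End C.

Lemma split_l m n (j : 'I_m) : split (lshift n j) = inl j.
Proof. exact: (unsplitK (inl _ j)). Qed.
Lemma split_r m n (j : 'I_n) : split (rshift m j) = inr j.
Proof. exact: (unsplitK (inr _ j)). Qed.

Lemma cont_sum k l (p : pop k) (q : pop l) s :
  reflect (exists2 t, t <= size s & cont p (take t s) && cont q (drop t s))
          (cont (sum_rel p q) s).
Proof.
apply: (iffP (contE _ _)).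
- move=> [F [H1 H2 H3]].
  have Hl : forall j m, (j != m) && p j m -> (lshift l j != lshift l m) && sum_rel p q (lshift l j) (lshift l m).
    move=> j m /andP[jm pjm]; rewrite /sum_rel !split_l pjm andbT.
    by apply: contra jm => /eqP/lshift_inj ->.
  have Hr : forall j m, (j != m) && q j m -> (rshift k j != rshift k m) && sum_rel p q (rshift k j) (rshift k m).
    move=> j m /andP[jm pjm]; rewrite /sum_rel !split_r pjm andbT.
    by apply: contra jm => /eqP/rshift_inj ->.
  move: q F H1 H2 H3 Hl Hr; case: l => [|l'] q F H1 H2 H3 Hl Hr.
  + exists (size s) => //; rewrite take_size drop_size cont_nil eqxx andbT.
    apply/contE; exists (fun j => F (lshift 0 j)); split => //.
    * by move=> j m jm; apply: H2.
    * by move=> j m /Hl /H3.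
  + set t := F (rshift k ord0).
    have Ht : forall i, t <= F (rshift k i).
      move=> i; rewrite /t; case: (posnP i) => [i0|ip].
      * by rewrite (_ : i = ord0) //; apply: val_inj.
      * by apply/ltnW/H2 => /=; rewrite ltn_add2l.
    exists t; first exact/ltnW/H1.
    apply/andP; split; apply/contE.
    * exists (fun j => F (lshift l'.+1 j)); split => //.
      - move=> j; rewrite size_take; have := H1 (rshift k ord0).
        have : F (lshift l'.+1 j) < t by apply: H2 => /=; have := ltn_ord j; lia.
        by rewrite -/t; case: ifP => //; lia.
      - by move=> j m jm; apply: H2.
      - by move=> j m /Hl /H3; rewrite !nth_take //; apply: H2 => /=; [have := ltn_ord m|have := ltn_ord j]; lia.
    * exists (fun i => F (rshift k i) - t); split.
      - by move=> i; rewrite size_drop; have := H1 (rshift k i); have := Ht i; lia.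
      - move=> j m jm; have := Ht j; have := Ht m.
        have : F (rshift k j) < F (rshift k m) by apply: H2 => /=; rewrite ltn_add2l.
        lia.
      - by move=> j m /Hr /H3; rewrite !nth_drop !subnKC.
- move=> [t ts /andP[/contE[f [f1 f2 f3]] /contE[g [g1 g2 g3]]]].
  exists (fun x => match split x with inl j => f j | inr i => t + g i end).
  have ft : forall j, f j < t by move=> j; have := f1 j; rewrite size_take; case: ifP; lia.
  split.
  + move=> x; case: splitP => [j _|i _].
    * exact: leq_trans (f1 j) (size_take_le _ _).
    * by have := g1 i; rewrite size_drop; lia.
  + move=> x y; case: splitP => [j ->|i ->]; case: splitP => [m ->|n ->] /=.
    * exact: f2.
    * by move=> _; have := ft j; lia.
    * by have := ltn_ord m; lia.
    * by rewrite ltn_add2l => /g2; lia.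
  + move=> x y; rewrite /sum_rel; case: splitP => [j Ej|i Ei]; case: splitP => [m Em|n En]; rewrite ?andbF //.
    * move=> /andP[xy pjm]; have := f3 j m; rewrite pjm andbT !nth_take ?ft //; apply.
      by apply: contra xy => /eqP jm; apply/eqP/val_inj; rewrite /= Ej Em jm.
    * move=> /andP[xy pjm]; have := g3 i n; rewrite pjm andbT !nth_drop; apply.
      by apply: contra xy => /eqP jm; apply/eqP/val_inj; rewrite /= Ei En jm.
Qed.

Definition plist n (pi : 'S_n) : seq nat := map (fun j => val (pi j)) (enum 'I_n).

Lemma size_plist n (pi : 'S_n) : size (plist pi) = n.
Proof. by rewrite size_map size_enum_ord. Qed.

Lemma nth_plist n (pi : 'S_n) (j : 'I_n) : nth 0 (plist pi) j = pi j.
Proof. by rewrite /plist (nth_map j) ?size_enum_ord // nth_ord_enum. Qed.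

Lemma contains_plist k (p : pop k) n (pi : 'S_n) : contains p pi = cont p (plist pi).
Proof.
apply/existsP/contE => [[f /forallP Hf]|[F [H1 H2 H3]]].
- exists (fun j => val (f j)); split.
  + by move=> j; rewrite size_plist; apply: ltn_ord.
  + by move=> j m jm; have /forallP/(_ m)/andP[/implyP/(_ jm) ?  _] := Hf j.
  + move=> j m jm; have /forallP/(_ m)/andP[_ /implyP/(_ jm)] := Hf j.
    by rewrite !nth_plist.
- have H1' : forall j, F j < n by move=> j; rewrite -(size_plist pi).
  exists [ffun j => Ordinal (H1' j)]; apply/forallP => j; apply/forallP => m.
  rewrite !ffunE /=; apply/andP; split; apply/implyP.
  + exact: H2.
  + by move/H3; rewrite -(nth_plist pi (Ordinal (H1' j))) -(nth_plist pi (Ordinal (H1' m))).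
Qed.

Lemma plist_inj n : injective (@plist n).
Proof.
move=> pi1 pi2 E; apply/permP => j; apply: val_inj.
by have := nth_plist pi1 j; rewrite E nth_plist.
Qed.

Lemma plist_perm n (pi : 'S_n) : perm_eq (plist pi) (iota 0 n).
Proof.
apply: uniq_perm; rewrite ?iota_uniq //.
- rewrite /plist map_inj_uniq ?enum_uniq // => a b /val_inj; exact: perm_inj.
- move=> x; rewrite mem_iota add0n /=; apply/mapP/idP => [[j _ ->]|xn]; first exact: ltn_ord.
  exists ((pi^-1)%g (Ordinal xn)); first by rewrite mem_enum.
  by rewrite permKV.
Qed.

Lemma plist_onto n (s : seq nat) : perm_eq s (iota 0 n) -> exists pi : 'S_n, plist pi = s.
Proof.
move=> Hs; have sz : size s = n by rewrite (perm_size Hs) size_iota.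
have us : uniq s by rewrite (perm_uniq Hs) iota_uniq.
have Hb : forall j : 'I_n, nth 0 s j < n.
  move=> j; have : nth 0 s j \in iota 0 n by rewrite -(perm_mem Hs) mem_nth // sz.
  by rewrite mem_iota.
have inj : injective (fun j => Ordinal (Hb j)).
  move=> a b [] /eqP; rewrite nth_uniq ?sz // => /eqP; exact: val_inj.
exists (perm inj); apply: (@eq_from_nth _ 0); rewrite size_plist ?sz // => i Hi.
by rewrite (nth_plist _ (Ordinal Hi)) permE.
Qed.

Lemma perm_plists n : perm_eq (map (@plist n) (enum 'S_n)) (permutations (iota 0 n)).
Proof.
apply: uniq_perm; rewrite ?permutations_uniq ?(map_inj_uniq (@plist_inj n)) ?enum_uniq //.
move=> s; rewrite mem_permutations; apply/mapP/idP => [[pi _ ->]|/plist_onto [pi <-]].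
- exact: plist_perm.
- by exists pi; rewrite ?mem_enum.
Qed.

Lemma num_avoidersE k (p : pop k) n :
  num_avoiders p n = count (fun s => ~~ cont p s) (permutations (iota 0 n)).
Proof.
rewrite -(seq.permP (perm_plists n)) count_map /num_avoiders cardsE cardE.
rewrite /enum_mem size_filter; rewrite count_filter; apply: eq_count => pi; rewrite !inE /=.
by rewrite andbT -contains_plist.
Qed.

Definition oinv (P : pred (seq nat)) :=
  forall (r : nat -> nat) s, {in s &, forall x y, (r x < r y) = (x < y)} -> P (map r s) = P s.

Lemma map_index_iota (S : seq nat) : uniq S -> map (index^~ S) S = iota 0 (size S).
Proof.
move=> uS; transitivity (map (index^~ S) (mkseq (nth 0 S) (size S))); first by rewrite mkseq_nth.
rewrite /mkseq -map_comp; apply: map_id_in => i.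
by rewrite mem_iota add0n /= => Hi; rewrite index_uniq.
Qed.

Lemma count_inv P Y : oinv P -> uniq Y ->
  count P (permutations Y) = count P (permutations (iota 0 (size Y))).
Proof.
move=> iP uY; set S := sort leq Y.
have pS : perm_eq S Y by rewrite perm_sort.
rewrite -(seq.permP (perm_permutations pS)) -(size_sort leq Y) -/S.
have uS : uniq S by rewrite (perm_uniq pS).
have sS : sorted ltn S by rewrite ltn_sorted_uniq_leq uS sort_sorted //; exact: leq_total.
set r := index^~ S.
have hom := sorted_ltn_nth ltn_trans 0 sS.
have mono : {in S &, forall x y, (r x < r y) = (x < y)}.
  move=> x y xS yS.
  have ex : nth 0 S (r x) = x by rewrite nth_index.
  have ey : nth 0 S (r y) = y by rewrite nth_index.
  have rxs : r x < size S by rewrite index_mem.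
  have rys : r y < size S by rewrite index_mem.
  case: (ltngtP (r x) (r y)) => H.
  - by rewrite -{1}ex -{1}ey; apply/esym/hom.
  - by have := hom _ _ rys rxs H; rewrite ex ey => /ltnW; rewrite leqNgt => /negbTE.
  - by rewrite -ex -ey H ltnn.
have inS : forall s, s \in permutations S -> {in s, forall x, x \in S}.
  by move=> s; rewrite mem_permutations => /perm_mem E x; rewrite E.
have -> : count P (permutations S) = count P (map (map r) (permutations S)).
  rewrite count_map; apply: eq_in_count => s /inS Hs /=; apply/esym/iP.
  by move=> x y /Hs xS /Hs yS; apply: mono.
apply/seq.permP/uniq_perm; rewrite ?permutations_uniq //.
  rewrite map_inj_in_uniq ?permutations_uniq //.
  move=> s1 s2 H1 H2; apply: (@inj_in_map _ _ r (mem S)).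
  - by move=> x y xS yS; apply: index_inj.
  - by apply/allP => x /(inS _ H1).
  - by apply/allP => x /(inS _ H2).
move=> t; rewrite mem_permutations -(map_index_iota uS); apply/mapP/idP.
  by move=> [s]; rewrite mem_permutations => Hs ->; apply: perm_map.
move=> Ht; exists (map (nth 0 S) t).
  rewrite mem_permutations -{2}(mkseq_nth 0 S) /mkseq; apply: perm_map.
  by rewrite -(map_index_iota uS).
rewrite -map_comp map_id_in // => i.
rewrite (perm_mem Ht) map_index_iota // mem_iota add0n /= => Hi.
by rewrite /r index_uniq.
Qed.

Lemma count_group (T K : eqType) (key : T -> K) (R : pred T) (L : seq T) (Ks : seq K) :
  uniq Ks -> {in L, forall s, key s \in Ks} ->
  count R L = \sum_(y <- Ks) count (fun s => (key s == y) && R s) L.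
Proof.
move=> uK; elim: L => [|s L IH] HL /=.
  by rewrite big1.
rewrite big_split /= -IH; last by move=> x xL; apply: HL; rewrite inE xL orbT.
congr (_ + _); rewrite (bigD1_seq (key s)) ?HL ?mem_head //= eqxx /= big1 ?addn0 //.
by move=> y /negbTE; rewrite eq_sym => ->.
Qed.

Lemma count_allpairs_cat t (P Q : pred (seq nat)) U V :
  {in U, forall u, size u = t} ->
  count (fun s => P (take t s) && Q (drop t s)) [seq u ++ v | u <- U, v <- V]
  = count P U * count Q V.
Proof.
elim: U => [|u U IH] HU //=.
rewrite count_cat IH; last by move=> x xU; apply: HU; rewrite inE xU orbT.
rewrite mulnDl; congr (_ + _); rewrite count_map.
have su : size u = t by apply: HU; rewrite mem_head.
rewrite (eq_count (a2 := fun v => P u && Q v)); last first.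
  by move=> v /=; rewrite take_size_cat // drop_size_cat.
by case: (P u); rewrite /= ?mul1n ?count_pred0 // ; elim: V.
Qed.

Section Split.
Variables (X : seq nat) (t : nat).
Hypotheses (uX : uniq X) (tX : t <= size X).
Let key (s : seq nat) := sort leq (take t s).

Lemma drop_perm s y : s \in permutations X -> key s = y ->
  perm_eq (drop t s) [seq x <- X | x \notin y].
Proof.
rewrite mem_permutations => sX <-.
have us : uniq s by rewrite (perm_uniq sX).
apply: uniq_perm; rewrite ?drop_uniq ?filter_uniq // => x.
rewrite mem_filter mem_sort -(perm_mem sX).
rewrite -{3}(cat_take_drop t s) mem_cat.
move: us; rewrite -{1}(cat_take_drop t s) cat_uniq => /and3P[_ /hasPn D _].
case Hd: (x \in drop t s); last by rewrite orbF andNb.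
by rewrite (negbTE (D _ Hd)).
Qed.

Lemma fiber_perm s0 : s0 \in permutations X ->
  perm_eq [seq s <- permutations X | key s == key s0]
          [seq u ++ v | u <- permutations (key s0), v <- permutations [seq x <- X | x \notin key s0]].
Proof.
move=> s0X; set y := key s0; set z := [seq x <- X | x \notin y].
have sz0 : size (take t s0) = t.
  by rewrite size_takel // (perm_size (_ : perm_eq s0 X)) // -mem_permutations.
have sy : size y = t by rewrite size_sort.
have sorty : sorted leq y by apply: sort_sorted; exact: leq_total.
apply: uniq_perm.
- by rewrite filter_uniq ?permutations_uniq.
- apply: allpairs_uniq; rewrite ?permutations_uniq //.
  move=> [u1 v1] [u2 v2] /allpairsP[[a b] [/= aP _ [-> ->]]] /allpairsP[[c d] [/= cP _ [-> ->]]] /= E.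
  have sa : size a = t by rewrite -sy; apply: perm_size; rewrite -mem_permutations.
  have sc : size c = t by rewrite -sy; apply: perm_size; rewrite -mem_permutations.
  have := congr1 (take t) E; rewrite !take_size_cat // => ->.
  by have := congr1 (drop t) E; rewrite !drop_size_cat // => ->.
move=> s; rewrite mem_filter; apply/andP/allpairsP.
- move=> [/eqP ks sX]; exists (take t s, drop t s); split => /=.
  + by rewrite mem_permutations -ks /key perm_sym perm_sort.
  + by rewrite mem_permutations; apply: drop_perm.
  + by rewrite cat_take_drop.
- move=> [[u v] [/= uP vP ->]].
  rewrite mem_permutations in uP; rewrite mem_permutations in vP.
  have su : size u = t by rewrite (perm_size uP).
  split.
  + rewrite /key take_size_cat //; apply/eqP.
    rewrite -/(key s0) -/y; transitivity (sort leq y); last by apply: sorted_sort => //; exact: leq_trans.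
    apply/perm_sortP => //; [exact: leq_total|exact: leq_trans|exact: anti_leq].
  + rewrite mem_permutations.
    have E1 : perm_eq (u ++ v) (take t s0 ++ drop t s0).
      apply: perm_cat; first by rewrite (permPl uP) /y /key perm_sort.
      by rewrite (permPl vP) perm_sym; apply: drop_perm.
    by rewrite (permPl E1) cat_take_drop -mem_permutations.
Qed.

Lemma split_count (P P' Q Q' : pred (seq nat)) :
  oinv P -> oinv P' -> oinv Q -> oinv Q' ->
  count P (permutations (iota 0 t)) = count P' (permutations (iota 0 t)) ->
  count Q (permutations (iota 0 (size X - t))) = count Q' (permutations (iota 0 (size X - t))) ->
  count (fun s => P (take t s) && Q (drop t s)) (permutations X)
  = count (fun s => P' (take t s) && Q' (drop t s)) (permutations X).
Proof.
move=> iP iP' iQ iQ' eP eQ.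
have HK : {in permutations X, forall s, key s \in undup (map key (permutations X))}.
  by move=> s sX; rewrite mem_undup; apply: map_f.
rewrite !(@count_group _ _ key _ _ _ (undup_uniq _) HK); apply: eq_big_seq => y.
rewrite mem_undup => /mapP[s0 s0X ->].
have sz0 : size (take t s0) = t.
  by rewrite size_takel // (perm_size (_ : perm_eq s0 X)) // -mem_permutations.
have sy : size (key s0) = t by rewrite size_sort.
have sz : size [seq x <- X | x \notin key s0] = size X - t.
  rewrite -(perm_size (drop_perm s0X (erefl _))) size_drop.
  by rewrite (perm_size (_ : perm_eq s0 X)) // -mem_permutations.
have uy : uniq (key s0).
  by rewrite sort_uniq take_uniq // (perm_uniq (_ : perm_eq s0 X)) // -mem_permutations.
have uz : uniq [seq x <- X | x \notin key s0] by rewrite filter_uniq.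
have Hsz : {in permutations (key s0), forall u, size u = t}.
  by move=> u; rewrite mem_permutations => /perm_size ->.
have cf : forall R : pred (seq nat), count (fun s => (key s == key s0) && R s) (permutations X)
   = count R [seq s <- permutations X | key s == key s0].
  by move=> R; rewrite count_filter; apply: eq_count => s; rewrite /= andbC.
rewrite (cf (fun s => P (take t s) && Q (drop t s))) (cf (fun s => P' (take t s) && Q' (drop t s))).
rewrite !(seq.permP (fiber_perm s0X)) !count_allpairs_cat //.
by rewrite (count_inv iP uy) (count_inv iP' uy) (count_inv iQ uz) (count_inv iQ' uz) sy sz eP eQ.
Qed.
End Split.

Lemma oinv_cont k (p : rel 'I_k) : oinv (cont p).
Proof. by move=> r s H; apply: cont_map. Qed.

Lemma oinv_neg (P : pred (seq nat)) : oinv P -> oinv (fun s => ~~ P s).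
Proof. by move=> H r s Hr /=; rewrite H. Qed.

Lemma oinv_T : oinv predT.
Proof. by []. Qed.

Definition Ep k (p : rel 'I_k) t (u : seq nat) : bool :=
  cont p u && (if t is t'.+1 then ~~ cont p (take t' u) else true).

Lemma oinv_Ep k (p : rel 'I_k) t : oinv (Ep p t).
Proof.
move=> r s Hr; rewrite /Ep cont_map //; case: t => // t'.
rewrite -map_take cont_map //.
by move=> x y /mem_take xs /mem_take ys; apply: Hr.
Qed.

Lemma count_add (T : Type) (a b c : pred T) L :
  (forall x, (a x : nat) = b x + c x) -> count a L = count b L + count c L.
Proof. by move=> H; elim: L => //= x L ->; rewrite H; lia. Qed.

Lemma count_sumE (T : Type) (a : pred T) L : count a L = \sum_(x <- L) (a x : nat).
Proof. by elim: L => [|x L IH]; rewrite ?big_nil ?big_cons //= IH. Qed.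

Lemma cnt_Ep k (p p' : pop k) t :
  (forall m, count (fun s => ~~ cont p s) (permutations (iota 0 m))
           = count (fun s => ~~ cont p' s) (permutations (iota 0 m))) ->
  count (Ep p t) (permutations (iota 0 t)) = count (Ep p' t) (permutations (iota 0 t)).
Proof.
move=> H; case: t => [|t].
  have E : forall (q : pop k) L, count (Ep q 0) L = size L - count (fun s => ~~ cont q s) L.
    move=> q L; rewrite -(count_predC (cont q) L) addnK; apply: eq_count => u.
    by rewrite /Ep andbT.
  by rewrite !E H.
have E : forall (q : pop k), count (fun s => ~~ cont q (take t s)) (permutations (iota 0 t.+1))
   = count (Ep q t.+1) (permutations (iota 0 t.+1)) + count (fun s => ~~ cont q s) (permutations (iota 0 t.+1)).
  move=> q; apply: count_add => u; rewrite /Ep.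
  case Cu: (cont q u); case Ct: (cont q (take t u)) => //=.
  by move: Ct => /cont_take; rewrite Cu.
have E2 := E p; have E3 := E p'.
have F : count (fun s => ~~ cont p (take t s)) (permutations (iota 0 t.+1))
       = count (fun s => ~~ cont p' (take t s)) (permutations (iota 0 t.+1)).
  have G : forall (q : pop k), count (fun s => ~~ cont q (take t s)) (permutations (iota 0 t.+1))
     = count (fun s => ~~ cont q (take t s) && predT (drop t s)) (permutations (iota 0 t.+1)).
    by move=> q; apply: eq_count => s; rewrite andbT.
  rewrite !G; apply: (@split_count (iota 0 t.+1) t _ _ (fun s => ~~ cont p s) (fun s => ~~ cont p' s) predT predT); rewrite ?iota_uniq ?size_iota //.
  - exact/oinv_neg/oinv_cont.
  - exact/oinv_neg/oinv_cont.
have := H t.+1; lia.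
Qed.

Lemma sum_pick N t0 (f : nat -> bool) : t0 < N ->
  \sum_(i < N) ((((i : nat) == t0) && f i) : nat) = f t0.
Proof.
move=> H; rewrite (bigD1 (Ordinal H)) //= eqxx /= big1 ?addn0 // => i ne.
suff -> : ((i : nat) == t0) = false by [].
apply/negbTE; apply: contra ne => /eqP e; apply/eqP/val_inj.
by rewrite /= e.
Qed.

Lemma decomp k l (p : pop k) (q : pop l) s :
  (~~ cont (pop_sum p q) s : nat) = ~~ cont p s
    + \sum_(i < (size s).+1) ((Ep p i (take i s) && ~~ cont q (drop i s)) : nat).
Proof.
case Cs: (cont p s) => /=.
- have ex : exists i, cont p (take i s) by exists (size s); rewrite take_size.
  set t0 := ex_minn ex.
  have [Ct0 mint0] : cont p (take t0 s) /\ forall i, cont p (take i s) -> t0 <= i.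
    by rewrite /t0; case: ex_minnP.
  have t0s : t0 <= size s by apply: mint0; rewrite take_size.
  have mono : forall i, t0 <= i -> cont p (take i s).
    by move=> i Hi; apply: (@cont_take _ _ t0); rewrite take_takel.
  rewrite (eq_bigr (fun i : 'I_(size s).+1 => (((i : nat) == t0) && ~~ cont q (drop i s)) : nat)); last first.
    move=> i _; congr (nat_of_bool (_ && _)); rewrite /Ep.
    case: (ltngtP i t0) => Hi.
    + by apply/negbTE/negP => /andP[C _]; have := mint0 _ C; rewrite leqNgt Hi.
    + rewrite mono ?(ltnW Hi) //=; move: Hi; case: (nat_of_ord i) => // i' Hi.
      by rewrite take_takel // mono.
    + rewrite -Hi in Ct0 *; rewrite Ct0 ?eqxx /=; move: Hi Ct0; case: (nat_of_ord i) => // i' Hi _.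
      rewrite take_takel //; apply/negP => C; have := mint0 _ C; lia.
  rewrite add0n (@sum_pick _ t0 (fun i => ~~ cont q (drop i s))) //; congr (nat_of_bool (~~ _)).
  apply/idP/idP.
  + move/cont_sum => [t ts /andP[Cpt Cqt]].
    have := mint0 _ Cpt => le.
    by apply: (@cont_drop _ _ (t - t0)); rewrite drop_drop subnK.
  + by move=> Cq; apply/cont_sum; exists t0 => //; rewrite Ct0 Cq.
- rewrite big1 => [|i _]; last by rewrite /Ep; case Ci: (cont p (take i s)) => //; move: Ci => /cont_take; rewrite Cs.
  suff -> : cont (pop_sum p q) s = false by [].
  apply/negbTE/negP => /cont_sum [t _ /andP[/cont_take]]; rewrite Cs.
  by [].
Qed.

Lemma av_all k (p p' : pop k) : wilf_equiv p p' ->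
  forall m, count (fun s => ~~ cont p s) (permutations (iota 0 m))
          = count (fun s => ~~ cont p' s) (permutations (iota 0 m)).
Proof.
move=> H [|m].
  by rewrite /= !cont_nil.
by rewrite -!num_avoidersE; apply: H.
Qed.

Theorem theorem1p4 (k l : nat) (p p' : pop k) (q q' : pop l) :
  wilf_equiv p p' -> wilf_equiv q q' ->
  wilf_equiv (pop_sum p q) (pop_sum p' q').
Proof.
move=> /av_all Hp /av_all Hq n _; rewrite !num_avoidersE.
set L := permutations (iota 0 n).
have sL : {in L, forall s, size s = n}.
  by move=> s; rewrite mem_permutations => /perm_size ->; rewrite size_iota.
have D : forall (p : pop k) (q : pop l),
  count (fun s => ~~ cont (pop_sum p q) s) L = count (fun s => ~~ cont p s) L
   + \sum_(i < n.+1) count (fun s => Ep p i (take i s) && ~~ cont q (drop i s)) L.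
  move=> p0 q0; rewrite !count_sumE.
  rewrite (eq_bigr (fun i : 'I_n.+1 => \sum_(x <- L) ((Ep p0 i (take i x) && ~~ cont q0 (drop i x)) : nat))); last by move=> i _; rewrite count_sumE.
  rewrite exchange_big /= -big_split /=; apply: eq_big_seq => s /sL sn.
  by rewrite decomp sn.
rewrite !D Hp; congr (_ + _); apply: eq_bigr => i _.
apply: (@split_count (iota 0 n) i _ _ (Ep p i) (Ep p' i) (fun s => ~~ cont q s) (fun s => ~~ cont q' s)).
- exact: iota_uniq.
- by rewrite size_iota -ltnS.
- exact: oinv_Ep.
- exact: oinv_Ep.
- exact/oinv_neg/oinv_cont.
- exact/oinv_neg/oinv_cont.
- exact: cnt_Ep.
- exact: Hq.
Qed.
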